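(* Let $A$ be a graded Frobenius algebra of Gorenstein parameter $-\ell$. Then for every $i\in\mathbb{N}$, $D(A_{\ge i}(i))\cong A(\ell-i)/A(\ell-i)_{\ge1}$ as graded right $A$-modules.
   Context: Graded algebras are $\mathbb{N}$-graded algebras over an algebraically closed field $k$. $M(n)_m=M_{n+m}$, $M_{\ge n}=\bigoplus_{m\ge n}M_m$, $D(M)=\bigoplus_m\mathrm{Hom}_k(M_{-m},k)$ (the dual of a graded left module is a graded right module). $A_{\ge i}$ is regarded as a graded left $A$-module. $A$ is graded Frobenius of Gorenstein parameter $-\ell$ if it is locally finite and $D(A)\cong A(\ell)$ as graded right $A$-modules. *)

(* Defs.v *)
From HB Require Import structures.
From mathcomp Require Import all_boot all_algebra.
Set Implicit Arguments. Unset Strict Implicit. Unset Printing Implicit Defensive.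
Import GRing.Theory.
Local Open Scope ring_scope.

Definition dcast {I : Type} (V : I -> Type) {i j : I} (e : i = j) (x : V i) : V j :=
  eq_rect i V x j e.
Arguments dcast {I} V {i j} e x.

Section Graded.
Variable k : fieldType.

Record galg := GAlg {
  acomp : nat -> vectType k;
  amul : forall n m, acomp n -> acomp m -> acomp (n + m)%N;
  aone : acomp 0%N }.

Definition is_graded_algebra (A : galg) : Prop :=
  [/\ (forall n m (y : acomp A m), linear (fun x : acomp A n => amul x y)),
      (forall n m (x : acomp A n), linear (fun y : acomp A m => amul x y)),
      (forall n m p (x : acomp A n) (y : acomp A m) (z : acomp A p),
         dcast (acomp A) (addnA n m p) (amul x (amul y z)) = amul (amul x y) z),
      (forall n (x : acomp A n), amul (aone A) x = x)
    & (forall n (x : acomp A n), dcast (acomp A) (addn0 n) (amul x (aone A)) = x)].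

Variable A : galg.

Record grmod := GRMod {
  rcomp : int -> vectType k;
  ract : forall (m : int) (n : nat), rcomp m -> acomp A n -> rcomp (m + Posz n) }.
Record glmod := GLMod {
  lcomp : int -> vectType k;
  lact : forall (n : nat) (m : int), acomp A n -> lcomp m -> lcomp (Posz n + m) }.

Definition grIso (M N : grmod) : Prop :=
  exists f : forall m, rcomp M m -> rcomp N m,
    [/\ forall m, linear (f m),
        forall m, bijective (f m)
      & forall m n (x : rcomp M m) (a : acomp A n),
          f (m + Posz n) (ract x a) = ract (f m x) a].

(* A viewed as Z-graded: zero in negative degrees *)
Definition gzcomp (m : int) : vectType k :=
  match m with Posz n => acomp A n | Negz _ => 'rV[k]_0 end.

Definition grreg : grmod := @GRMod gzcomp
  (fun m n => match m as m0 return gzcomp m0 -> acomp A n -> gzcomp (m0 + Posz n) with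
   | Posz m' => fun x a => dcast gzcomp (PoszD m' n) (amul x a)
   | Negz _ => fun _ _ => 0 end).

Definition glreg : glmod := @GLMod gzcomp
  (fun n m => match m as m0 return acomp A n -> gzcomp m0 -> gzcomp (Posz n + m0) with
   | Posz m' => fun a x => dcast gzcomp (PoszD n m') (amul a x)
   | Negz _ => fun _ _ => 0 end).

Definition grshift (M : grmod) (s : int) : grmod :=
  @GRMod (fun m => rcomp M (s + m))
    (fun m n x a => dcast (rcomp M) (esym (addrA s m (Posz n))) (ract x a)).
Definition glshift (N : glmod) (s : int) : glmod :=
  @GLMod (fun m => lcomp N (s + m))
    (fun n m a x => dcast (lcomp N) (addrCA (Posz n) s m) (lact a x)).

Definition grsub (M : grmod) (S : forall m, {vspace rcomp M m}) : grmod :=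
  @GRMod (fun m => subvs_of (S m))
    (fun m n x a => vsproj (S (m + Posz n)) (ract (vsval x) a)).
Definition glsub (N : glmod) (S : forall m, {vspace lcomp N m}) : glmod :=
  @GLMod (fun m => subvs_of (S m))
    (fun n m a x => vsproj (S (Posz n + m)) (lact a (vsval x))).

Definition glge (N : glmod) (i : int) : glmod :=
  @glsub N (fun m => if i <= m then fullv else 0%VS).

(* M / M_{>= i} : realised on the complementary graded subspace M_{< i},
   with the induced action (projection killing degrees >= i) *)
Definition grquot_ge (M : grmod) (i : int) : grmod :=
  @grsub M (fun m => if m < i then fullv else 0%VS).

Lemma dual_deg (n : nat) (m : int) : Posz n + - (m + Posz n) = - m.
Proof. by rewrite opprD addrCA addrN addr0. Qed.

Definition gdual (N : glmod) : grmod :=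
  @GRMod (fun m => 'Hom(lcomp N (- m), k^o))
    (fun m n f a => linfun (fun x : lcomp N (- (m + Posz n)) =>
        f (dcast (lcomp N) (dual_deg n m) (lact a x)))).

End Graded.

(* A graded Frobenius of Gorenstein parameter -l : locally finite (built
   into galg) and D(A) ~= A(l) as graded right A-modules *)
Definition graded_frobenius (k : fieldType) (A : galg k) (l : int) : Prop :=
  is_graded_algebra A /\ grIso (gdual (glreg A)) (grshift (grreg A) l).

(* Main.v *)
Require Import Defs.
From HB Require Import structures.
From mathcomp Require Import all_boot all_algebra zify.
Set Implicit Arguments. Unset Strict Implicit. Unset Printing Implicit Defensive.
Import GRing.Theory.
Local Open Scope ring_scope.

Section Help.
Variable k : fieldType.

Lemma dcast_dcast (V : int -> Type) p q r (e1 : p = q) (e2 : q = r) x :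
  dcast V e2 (dcast V e1 x) = dcast V (etrans e1 e2) x.
Proof. by case: r / e2; case: q / e1. Qed.

Lemma dcast_irr (V : int -> Type) p q (e1 e2 : p = q) x :
  dcast V e1 x = dcast V e2 x.
Proof. by rewrite (eq_irrelevance e1 e2). Qed.

Lemma dcast_id (V : int -> Type) p (e : p = p) x : dcast V e x = x.
Proof. by rewrite (eq_irrelevance e erefl). Qed.

Lemma dcast_fam (W : int -> Type) (g : int -> int) p q (e : p = q) x :
  dcast (fun r => W (g r)) e x = dcast W (congr1 g e) x.
Proof. by case: q / e. Qed.

Lemma dcast_nat (V W : int -> Type) (L : forall p, V p -> W p) p q (e : p = q) x :
  L q (dcast V e x) = dcast W e (L p x).
Proof. by case: q / e. Qed.

Lemma dcast_linear (V : int -> vectType k) p q (e : p = q) : linear (dcast V e).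
Proof. by case: q / e. Qed.

Lemma dcast_vsval (V : int -> vectType k) (T : forall p, {vspace V p}) p q (e : p = q)
  (x : subvs_of (T p)) :
  vsval (dcast (fun r => subvs_of (T r)) e x) = dcast V e (vsval x).
Proof. by case: q / e. Qed.

Lemma dcast_hom (W : int -> vectType k) (K : vectType k) (g : int -> int) p q (e : p = q)
   (h : 'Hom(W (g p), K)) y :
  (dcast (fun r => 'Hom(W (g r), K)) e h) y = h (dcast W (congr1 g (esym e)) y).
Proof. by move: y; case: q / e. Qed.

Lemma linfunE' (aT rT : vectType k) (F : aT -> rT) : linear F -> linfun F =1 F.
Proof.
move=> L.
pose FL : {linear aT -> rT} := HB.pack F (GRing.isLinear.Build _ _ _ _ F L).
exact: (lfunE FL).
Qed.

Lemma subvs0_eq0 (V : vectType k) (x : subvs_of (0%VS : {vspace V})) : x = 0.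
Proof. apply: val_inj => /=; have := subvsP x; rewrite memv0 => /eqP ->. by []. Qed.

End Help.

Lemma subvs_eq0 (k : fieldType) (V : vectType k) (U : {vspace V}) (x : subvs_of U) :
  (forall v, v \in U -> v = 0) -> x = 0.
Proof. move=> h; apply: val_inj => /=; rewrite (h _ (subvsP x)); by []. Qed.

Lemma lact_lin (k : fieldType) (A : galg k) : is_graded_algebra A ->
  forall n (a : acomp A n) (p : int), linear (fun y : gzcomp A p => lact (g := glreg A) a y).
Proof.
case=> _ Hr _ _ _ n a [p|p] /=.
- by move=> c u v; rewrite Hr dcast_linear.
- by move=> c u v; rewrite scaler0 addr0.
Qed.

Lemma lactP (k : fieldType) (A : galg k) : is_graded_algebra A ->
  forall n (a : acomp A n) (p : int) c (u v : gzcomp A p),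
  lact (g := glreg A) a (c *: u + v) = c *: lact (g := glreg A) a u + lact (g := glreg A) a v.
Proof. by move=> H n a p c u v; rewrite (lact_lin H). Qed.

Lemma dcast_val (k : fieldType) (V : int -> vectType k) (T : forall p, {vspace V p}) p q (e : p = q)
  (x : subvs_of (T p)) :
  \val (dcast (fun r => subvs_of (T r)) e x) = dcast V e (\val x).
Proof. by case: q / e. Qed.

Lemma valprojK (k : fieldType) (V : vectType k) (U : {vspace V}) v :
  v \in U -> \val (vsproj U v) = v.
Proof. exact: vsprojK. Qed.

Theorem lemma3p10 (k : closedFieldType) (A : galg k) (l : int) :
  graded_frobenius A l ->
  forall i : nat,
    grIso (gdual (glshift (glge (glreg A) (Posz i)) (Posz i)))
          (grquot_ge (grshift (grreg A) (l - Posz i)) 1).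
Proof.
move=> [Halg [phi [philin phibij phicomp]]] i.
pose SN (p : int) := (if Posz i <= p then fullv else 0%VS : {vspace gzcomp A p}).
have E2 : forall m : int, - (m - Posz i) = Posz i + - m.
  by move=> m; rewrite opprB.
have E1 : forall m : int, l + (m - Posz i) = l - Posz i + m.
  by move=> m; rewrite addrA addrAC.
pose g0 (m : int) (f : 'Hom(subvs_of (SN (Posz i + - m)), k^o)) (y : gzcomp A (- (m - Posz i))) :=
   f (vsproj (SN (Posz i + - m)) (dcast (gzcomp A) (E2 m) y)).
have g0lin : forall m f, linear (g0 m f).
  move=> m f a x y; rewrite /g0 dcast_linear linearP /=.
  by rewrite linearP.
pose G m f : 'Hom(gzcomp A (- (m - Posz i)), k^o) := linfun (g0 m f).
pose F (m : int) (f : rcomp (gdual (glshift (glge (glreg A) (Posz i)) (Posz i))) m) :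
   rcomp (grquot_ge (grshift (grreg A) (l - Posz i)) 1) m :=
  vsproj _ (dcast (gzcomp A) (E1 m) (phi (m - Posz i) (G m f))).
exists F; split.
- move=> m a f1 f2.
  have GE : forall f y, G m f y = g0 m f y by move=> f y; rewrite /G linfunE'.
  rewrite /F -linearP; congr (vsproj _ _).
  transitivity (dcast (gzcomp A) (E1 m) (phi (m - Posz i) (a *: G m f1 + G m f2))); last first.
    by rewrite philin dcast_linear.
  apply: (congr1 (fun h => dcast (gzcomp A) (E1 m) (phi (m - Posz i) h))).
  apply/lfunP => y; rewrite GE !lfun_simp /= !GE /g0 /=.
  by rewrite !lfun_simp.
- move=> m; have [psi phiK psiK] := phibij (m - Posz i).
  have GE : forall f y, G m f y = g0 m f y by move=> f y; rewrite /G linfunE'.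
  case: (boolP (m < 1)) => hm.
  + have memQ : forall v, v \in (if m < 1 then fullv else 0%VS : {vspace gzcomp A (l - Posz i + m)}).
      by move=> v; rewrite hm memvf.
    have memN : forall v, v \in SN (Posz i - m).
      by move=> v; rewrite /SN ifT ?memvf //; lia.
    pose h0 (q : subvs_of (if m < 1 then fullv else 0%VS : {vspace gzcomp A (l - Posz i + m)}))
       (x : subvs_of (SN (Posz i - m))) :=
      (psi (dcast (gzcomp A) (esym (E1 m)) (vsval q))) (dcast (gzcomp A) (esym (E2 m)) (vsval x)).
    have h0lin : forall q, linear (h0 q).
      by move=> q a x y; rewrite /h0 linearP dcast_linear linearP.
    exists (fun q => linfun (h0 q)).
    * move=> f; apply/lfunP => x; rewrite linfunE' // /h0 /F vsprojK // dcast_dcast dcast_id phiK.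
      by rewrite GE /g0 dcast_dcast dcast_id vsvalK.
    * move=> q; apply: val_inj; rewrite /F /= (vsprojK (memQ _)).
      transitivity (dcast (gzcomp A) (E1 m) (phi (m - Posz i) (psi (dcast (gzcomp A) (esym (E1 m)) (vsval q))))); last first.
        by rewrite psiK dcast_dcast dcast_id.
      apply: (congr1 (fun h => dcast (gzcomp A) (E1 m) (phi (m - Posz i) h))).
      apply/lfunP => y; rewrite GE /g0 linfunE' // /h0 vsprojK // dcast_dcast dcast_id.
      by [].
  + exists (fun _ => 0).
    * move=> f; apply/lfunP => x.
      have -> : x = 0.
        apply: (@subvs_eq0 _ _ (SN (Posz i + - m)) x) => v; rewrite /SN ifF ?memv0; first by move/eqP.
        lia.
      by rewrite !linear0.
    * have z : forall x : subvs_of (if m < 1 then fullv else 0%VS : {vspace gzcomp A (l - Posz i + m)}), x = 0.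
        by move=> x; apply: subvs_eq0 => v; rewrite (negbTE hm) memv0; move/eqP.
      by move=> q; rewrite (z q) (z (F m 0)).
- move=> m n x a.
  case: (boolP (m + Posz n < 1)) => hm; last first.
    have z : forall x : subvs_of (if m + Posz n < 1 then fullv else 0%VS : {vspace gzcomp A (l - Posz i + (m + Posz n))}), x = 0.
      by move=> y; apply: subvs_eq0 => v; rewrite (negbTE hm) memv0; move/eqP.
    by rewrite (z (F _ _)) (z (ract (F m x) a)).
  have hm0 : m < 1 by lia.
  have E3 : m - Posz i + Posz n = m + Posz n - Posz i by rewrite addrAC.
  have Gact : G (m + Posz n) (ract x a) =
     dcast (fun p => 'Hom(gzcomp A (- p), k^o)) E3 (@ract _ _ (gdual (glreg A)) (m - Posz i) n (G m x) a).
    apply/lfunP => y.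
    rewrite (dcast_hom (W := gzcomp A) (g := fun p => - p)).
    rewrite /G !linfunE' /g0;
      try (move=> c u v; rewrite !(dcast_linear, lactP Halg, linearP) //; done).
    cbn [ract lact gdual glshift glge glsub].
    rewrite linfunE';
      try (move=> c u v; rewrite !(dcast_linear, lactP Halg, linearP) //; done).
    congr (x _); apply: val_inj.
    rewrite (dcast_val (V := fun p => gzcomp A (Posz i + p)) (T := fun p => SN (Posz i + p))).
    rewrite (dcast_val (V := fun p => gzcomp A p) (T := fun p => SN p)).
    have memif : forall p (c : bool) (v : gzcomp A p), c -> v \in (if c then fullv else 0%VS : {vspace gzcomp A p}).
      by move=> p c v ->; exact: memvf.
    rewrite (vsprojK (U := SN (Posz i - (m + Posz n)))); last by apply: memif; lia.
    rewrite (valprojK (U := (if Posz i <= Posz n + (Posz i - (m + Posz n)) then fullv else 0%VS : {vspace gzcomp A (Posz n + (Posz i - (m + Posz n)))}))); last by apply: memif; lia.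
    rewrite (valprojK (U := SN (Posz i - m))); last by apply: memif; lia.
    rewrite !(dcast_nat (V := gzcomp A) (W := fun p => gzcomp A (Posz n + p)) (fun p y => @lact _ _ (glreg A) n p a y)).
    rewrite (dcast_fam (W := gzcomp A) (g := fun p => Posz i + p)).
    rewrite !(dcast_fam (W := gzcomp A) (g := fun p => Posz n + p)).
    rewrite !dcast_dcast.
    exact: dcast_irr.
  rewrite /F Gact.
  rewrite (dcast_nat (V := fun p => 'Hom(gzcomp A (- p), k^o)) (W := fun p => gzcomp A (l + p)) phi).
  rewrite phicomp.
  have RHSe : forall q : rcomp (grquot_ge (grshift (grreg A) (l - Posz i)) 1) m,
     ract q a = vsproj (if m + Posz n < 1 then fullv else 0%VS : {vspace gzcomp A (l - Posz i + (m + Posz n))})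
        (dcast (gzcomp A) (esym (addrA (l - Posz i) m n)) (@ract _ _ (grreg A) (l - Posz i + m) n (vsval q) a)).
    by [].
  rewrite RHSe (vsprojK (U := (if m < 1 then fullv else 0%VS : {vspace gzcomp A (l - Posz i + m)}))); last by rewrite hm0 memvf.
  rewrite (dcast_nat (V := gzcomp A) (W := fun p => gzcomp A (p + Posz n)) (fun p y => @ract _ _ (grreg A) p n y a)).
  have LHSe : forall y : gzcomp A (l + (m - Posz i)),
     @ract _ _ (grshift (grreg A) l) (m - Posz i) n y a =
     dcast (gzcomp A) (esym (addrA l (m - Posz i) n)) (@ract _ _ (grreg A) (l + (m - Posz i)) n y a).
    by [].
  rewrite LHSe (dcast_fam (W := gzcomp A) (g := fun p => l + p)) (dcast_fam (W := gzcomp A) (g := fun p => p + Posz n)).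
  rewrite !dcast_dcast; congr (vsproj _ _); exact: dcast_irr.
Qed.
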